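(* Consider two patches with $p=d_{12}$, $q=d_{21}$, $0<p,q<1$, in an environment alternating deterministically $e_1,e_2,e_1,e_2,\dots$ starting with $e_1$ at generation $0$. Write $M_1=m_1(e_1)$, $M_2=m_1(e_2)$, $m_1=m_2(e_1)$, $m_2=m_2(e_2)$, all positive and finite, and assume the offspring laws are not such that every individual has exactly one offspring almost surely. Then the metapopulation persists with positive probability if and only if $$ M_1M_2(1-p)^2+(M_1m_2+m_1M_2)pq+m_1m_2(1-q)^2>\min\big(2,\;1+M_1M_2m_1m_2(1-p-q)^2\big). $$
   Context: Model with environment: at each generation the environment is in a state $w$; every individual living in patch $i$ independently produces a random number of offspring with mean $m_i(w)$ (depending on the current environment state), and each offspring independently moves from patch $i$ to patch $j$ with probability $d_{ij}$ (dispersal does not depend on the environment). Here $d_{11}=1-p$, $d_{12}=p$, $d_{21}=q$, $d_{22}=1-q$. Persistence with positive probability means the total population is nonzero at all generations with positive probability (starting from one individual in either patch). *)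

(* Defs.v *)
From Stdlib Require Import Reals ClassicalEpsilon.
Open Scope R_scope.

Definition is_law (pi : nat -> R) : Prop :=
  (forall k, 0 <= pi k) /\ infinite_sum pi 1.

Definition has_mean (pi : nat -> R) (m : R) : Prop :=
  infinite_sum (fun k => INR k * pi k) m.

Definition pgf (pi : nat -> R) (s : R) : R :=
  epsilon (inhabits 0) (fun l => infinite_sum (fun k => pi k * s ^ k) l).

(* Environment at generation t: true = e1, false = e2 (alternating, e1 at 0). *)
Definition env (t : nat) : bool := Nat.even t.

(* L patch envstate : offspring law; patch true = patch 1, false = patch 2;
   envstate true = e1, false = e2.
   ext L p q n t = (a, b) where a (resp. b) is the probability that the
   descendance of one individual living in patch 1 (resp. patch 2) at
   generation t is extinct at generation t + n.  Offspring of an individual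
   in patch 1 go to patch 2 with probability p, offspring of an individual
   in patch 2 go to patch 1 with probability q, independently. *)
Fixpoint ext (L : bool -> bool -> nat -> R) (p q : R) (n t : nat) : R * R :=
  match n with
  | O => (0, 0)
  | S n' =>
      let ab := ext L p q n' (S t) in
      (pgf (L true (env t)) ((1 - p) * fst ab + p * snd ab),
       pgf (L false (env t)) (q * fst ab + (1 - q) * snd ab))
  end.

(* Persistence with positive probability starting from one individual in
   patch i at generation 0: P(Z_n <> 0) stays bounded below by some delta > 0
   for all n (equivalently, P(Z_n <> 0 for all n) > 0). *)
Definition persists (L : bool -> bool -> nat -> R) (p q : R) (i : bool) : Prop :=
  exists delta, 0 < delta /\
    forall n, (if i then fst (ext L p q n 0) else snd (ext L p q n 0)) <= 1 - delta.

(* Main.v *)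
Require Import Defs.
From Stdlib Require Import Reals Lra Lia Psatz ClassicalEpsilon Classical.
Open Scope R_scope.

Lemma Un_cv_ext (U V : nat -> R) l : (forall n, U n = V n) -> Un_cv U l -> Un_cv V l.
Proof. intros E H eps He. destruct (H eps He) as [N HN]. exists N. intros n Hn. rewrite <- E. auto. Qed.

Lemma cv_const x : Un_cv (fun _ => x) x.
Proof. intros eps He. exists 0%nat. intros. unfold Rdist. rewrite Rminus_diag, Rabs_R0. lra. Qed.

Lemma sum_lin a b la lb x y : infinite_sum a la -> infinite_sum b lb ->
  infinite_sum (fun k => x * a k + y * b k) (x*la + y*lb).
Proof.
  intros Ha Hb.
  change (Un_cv (fun n => sum_f_R0 (fun k => x * a k + y * b k) n) (x*la + y*lb)).
  apply Un_cv_ext with (fun n => x * sum_f_R0 a n + y * sum_f_R0 b n).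
  - intro n; induction n; simpl; [ring| rewrite <- IHn; ring].
  - apply CV_plus; apply CV_mult; try apply cv_const; assumption.
Qed.

Lemma sum_le a b la lb : (forall k, a k <= b k) -> infinite_sum a la -> infinite_sum b lb -> la <= lb.
Proof.
  intros H Ha Hb. apply Rle_cv_lim with (Un := fun n => sum_f_R0 a n) (Vn := fun n => sum_f_R0 b n); auto.
  intro n; apply sum_Rle; auto.
Qed.

Lemma partial_le a l n : (forall k, 0 <= a k) -> infinite_sum a l -> sum_f_R0 a n <= l.
Proof. intros H Ha. apply sum_incr; auto. Qed.

Lemma term_le a l k : (forall n, 0 <= a n) -> infinite_sum a l -> a k <= l.
Proof.
  intros H Ha. apply Rle_trans with (sum_f_R0 a k); [|apply partial_le; auto].
  destruct k; simpl; [lra|]. pose proof (cond_pos_sum a k H). lra.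
Qed.

Lemma pow_le_one s k : 0 <= s <= 1 -> s ^ k <= 1.
Proof. intros Hs. induction k; simpl; [lra|]. pose proof (pow_le s k (proj1 Hs)). nra. Qed.

Lemma pgf_spec pi s : is_law pi -> 0 <= s <= 1 ->
  infinite_sum (fun k => pi k * s ^ k) (pgf pi s).
Proof.
  intros [Hpos Hsum] Hs. unfold pgf. apply epsilon_spec.
  assert (Hg : Un_growing (fun n => sum_f_R0 (fun k => pi k * s ^ k) n)).
  { unfold Un_growing. intro n. cbn [sum_f_R0]. pose proof (Hpos (S n)). pose proof (pow_le s (S n) (proj1 Hs)).
    pose proof (Rmult_le_pos _ _ H H0). lra. }
  assert (Hb : has_ub (fun n => sum_f_R0 (fun k => pi k * s ^ k) n)).
  { exists 1. unfold is_upper_bound, EUn. intros x [n Hn]; rewrite Hn. apply Rle_trans with (sum_f_R0 pi n).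
    - apply sum_Rle. intros k _. pose proof (Hpos k).
      assert (s ^ k <= 1) by (apply pow_le_one ; lra).
      pose proof (pow_le s k (proj1 Hs)). nra.
    - apply partial_le; auto. }
  destruct (growing_cv _ Hg Hb) as [l Hl]. exists l. exact Hl.
Qed.

Lemma pgf_range pi s : is_law pi -> 0 <= s <= 1 -> 0 <= pgf pi s <= 1.
Proof.
  intros Hl Hs. pose proof (pgf_spec pi s Hl Hs) as H. destruct Hl as [Hp H1].
  split.
  - apply Rle_trans with (pi 0%nat * s ^ 0); [simpl; specialize (Hp 0%nat); lra|].
    apply term_le with (a := fun k => pi k * s ^ k); auto.
    intro n. pose proof (Hp n); pose proof (pow_le s n (proj1 Hs)); nra.
  - refine (sum_le _ _ _ _ _ H H1). intro k. simpl.
    pose proof (Hp k); pose proof (pow_le_one s k Hs); nra.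
Qed.

Lemma pgf_mono pi s t : is_law pi -> 0 <= s -> s <= t -> t <= 1 -> pgf pi s <= pgf pi t.
Proof.
  intros Hl Hs Hst Ht. pose proof (pgf_spec pi s Hl (conj Hs (Rle_trans _ _ _ Hst Ht))).
  pose proof (pgf_spec pi t Hl (conj (Rle_trans _ _ _ Hs Hst) Ht)).
  refine (sum_le _ _ _ _ _ H H0). intro k. simpl.
  destruct Hl as [Hp _]. pose proof (Hp k). pose proof (pow_incr s t k (conj Hs Hst)). nra.
Qed.

Lemma bern1 h j : 0 <= h <= 1 -> 1 - INR j * h <= (1-h)^j.
Proof.
  intros Hh. induction j; [simpl; lra|]. rewrite S_INR; cbn [pow].
  pose proof (pos_INR j). nra.
Qed.

Lemma bern2 h j : 0 <= h <= 1 -> (2 <= j)%nat -> 1 - INR j * h + h^2 <= (1-h)^j.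
Proof.
  intros Hh Hj. induction Hj.
  - simpl. lra.
  - rewrite S_INR; cbn [pow]. assert (2 <= INR m) by (replace 2 with (INR 2) by (simpl; lra); apply le_INR; lia).
    assert (0 <= (1-h) * ((1-h)^m - (1 - INR m * h + h^2))) by (apply Rmult_le_pos; lra).
    assert (0 <= h*h*(INR m - h)) by (apply Rmult_le_pos; [nra|lra]). nra.
Qed.

Lemma bern3 h j : 0 <= h <= 1 -> (1-h)^j <= 1 - INR j * h + (INR j)^2 * h^2.
Proof.
  intros Hh. induction j; [simpl; lra|]. rewrite S_INR; cbn [pow].
  pose proof (pos_INR j). nra.
Qed.

Lemma gap_sum pi m h : is_law pi -> has_mean pi m -> 0 <= h <= 1 ->
  infinite_sum (fun j => pi j * (INR j * h - 1 + (1-h)^j)) (m * h - 1 + pgf pi (1-h)).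
Proof.
  intros Hl Hm Hh. pose proof (pgf_spec pi (1-h) Hl ltac:(lra)) as Hp.
  destruct Hl as [Hpos H1].
  pose proof (sum_lin _ _ _ _ h (-1) Hm H1) as S1.
  pose proof (sum_lin _ _ _ _ 1 1 S1 Hp) as S2.
  intros eps He. destruct (S2 eps He) as [N HN]. exists N. intros n Hn.
  replace (m * h - 1 + pgf pi (1 - h)) with (1 * (h * m + -1 * 1) + 1 * pgf pi (1 - h)) by ring.
  replace (sum_f_R0 (fun j => pi j * (INR j * h - 1 + (1 - h) ^ j)) n)
    with (sum_f_R0 (fun k => 1 * (h * (INR k * pi k) + -1 * pi k) + 1 * (pi k * (1 - h) ^ k)) n).
  - apply HN; auto.
  - apply sum_eq. intros. ring.
Qed.

Lemma gap_term_nonneg pi h j : is_law pi -> 0 <= h <= 1 -> 0 <= pi j * (INR j * h - 1 + (1-h)^j).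
Proof. intros [Hp _] Hh. pose proof (Hp j). pose proof (bern1 h j Hh). nra. Qed.

Lemma g_upper pi m h : is_law pi -> has_mean pi m -> 0 <= h <= 1 ->
  1 - pgf pi (1-h) <= m * h.
Proof.
  intros Hl Hm Hh. pose proof (gap_sum pi m h Hl Hm Hh).
  pose proof (term_le _ _ 0%nat (fun n => gap_term_nonneg pi h n Hl Hh) H). simpl in H0. lra.
Qed.

Lemma g_upper2 pi m h k : is_law pi -> has_mean pi m -> 0 <= h <= 1 -> (2 <= k)%nat ->
  1 - pgf pi (1-h) <= m * h - pi k * h^2.
Proof.
  intros Hl Hm Hh Hk. pose proof (gap_sum pi m h Hl Hm Hh).
  pose proof (term_le _ _ k (fun n => gap_term_nonneg pi h n Hl Hh) H).
  pose proof (bern2 h k Hh Hk). destruct Hl as [Hp _]. pose proof (Hp k). nra.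
Qed.

Lemma linear_mean pi m : is_law pi -> has_mean pi m -> (forall k, (2 <= k)%nat -> pi k = 0) ->
  m = pi 1%nat /\ pi 1%nat <= 1.
Proof.
  intros [Hp H1] Hm H2. split.
  - apply (uniqueness_sum _ _ _ Hm). intros eps He. exists 1%nat. intros n Hn.
    replace (sum_f_R0 (fun k => INR k * pi k) n) with (pi 1%nat).
    + unfold Rdist. rewrite Rminus_diag, Rabs_R0. lra.
    + induction n; [lia|]. destruct n; [simpl; ring|].
      cbn [sum_f_R0]. cbn [sum_f_R0] in IHn. rewrite (H2 (S (S n))) by lia.
      rewrite <- IHn by lia. ring.
  - apply (term_le pi 1 1%nat Hp H1).
Qed.

Lemma sum_f_lin a b x y n : sum_f_R0 (fun k => x * a k + y * b k) n = x * sum_f_R0 a n + y * sum_f_R0 b n.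
Proof. induction n; simpl; [ring| rewrite IHn; ring]. Qed.

Lemma g_lower pi m eta : is_law pi -> has_mean pi m -> 0 < eta ->
  exists h0, 0 < h0 <= 1 /\ forall h, 0 <= h <= h0 -> (m - eta) * h <= 1 - pgf pi (1-h).
Proof.
  intros Hl Hm He.
  destruct (Hm (eta/2) ltac:(lra)) as [N HN]. specialize (HN N (le_n N)).
  unfold Rdist in HN. apply Rabs_def2 in HN.
  set (S := sum_f_R0 (fun k => INR k * pi k) N) in *.
  set (K := (INR N)^2).
  assert (HK : 0 <= K) by (unfold K; nra).
  exists (Rmin 1 (eta / (2 * (K + 1)))). split.
  { split; [apply Rmin_glb_lt; [lra| apply Rdiv_lt_0_compat; lra]| apply Rmin_l]. }
  intros h Hh.
  assert (Hh1 : h <= 1) by (pose proof (Rmin_l 1 (eta / (2 * (K + 1)))); lra).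
  assert (Hh2 : h <= eta / (2 * (K + 1))) by (pose proof (Rmin_r 1 (eta / (2 * (K + 1)))); lra).
  assert (HKh : K * h <= eta / 2).
  { apply Rmult_le_compat_l with (r := K) in Hh2; auto.
    apply Rle_trans with (1 := Hh2). unfold Rdiv. rewrite Rinv_mult.
    assert (0 < / (K+1)) by (apply Rinv_0_lt_compat; lra).
    assert (K * / (K+1) <= 1).
    { apply Rmult_le_reg_r with (K+1); [lra|]. rewrite Rmult_assoc, Rinv_l by lra. lra. }
    assert (0 < /2) by lra. nra. }
  pose proof (pgf_spec pi (1-h) Hl ltac:(lra)) as Hp.
  destruct Hl as [Hpos H1].
  pose proof (sum_lin _ _ _ _ 1 (-1) H1 Hp) as S1.
  assert (Hnn : forall k, 0 <= 1 * pi k + -1 * (pi k * (1 - h) ^ k)).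
  { intro k. pose proof (Hpos k). pose proof (pow_le_one (1-h) k ltac:(lra)). nra. }
  pose proof (partial_le _ _ N Hnn S1) as P1.
  assert (P2 : sum_f_R0 (fun k => h * (INR k * pi k) + (- (K * h^2)) * pi k) N <=
               sum_f_R0 (fun k => 1 * pi k + -1 * (pi k * (1 - h) ^ k)) N).
  { apply sum_Rle. intros j Hj. pose proof (Hpos j). pose proof (bern3 h j ltac:(lra)).
    assert (INR j ^ 2 <= K).
    { unfold K. pose proof (le_INR _ _ Hj). pose proof (pos_INR j). nra. }
    assert (0 <= h^2) by nra.
    assert (pi j * (1-h)^j <= pi j * (1 - INR j * h + INR j ^ 2 * h^2)) by (apply Rmult_le_compat_l; lra).
    assert (pi j * (INR j ^ 2 * h^2) <= pi j * (K * h^2)) by (apply Rmult_le_compat_l; [lra| nra]).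
    nra. }
  rewrite sum_f_lin in P2. fold S in P2.
  pose proof (partial_le _ _ N Hpos H1) as P3.
  pose proof (cond_pos_sum _ N Hpos) as P4.
  assert (0 <= K * h^2 * (1 - sum_f_R0 pi N)) by (apply Rmult_le_pos; [nra|lra]).
  assert (K * h^2 <= eta / 2 * h) by nra.
  nra.
Qed.

Lemma keyB (G11 G12 G21 G22 : R -> R) p q M1 M2 m1 m2 t :
  0 < p < 1 -> 0 < q < 1 -> 0 < M1 -> 0 < M2 -> 0 < m1 -> 0 < m2 -> 0 < t ->
  (forall h, 0 <= h <= 1 -> G12 h <= M2 * h) ->
  (forall h, 0 <= h <= 1 -> G22 h <= m2 * h) ->
  (forall eta, 0 < eta -> exists h0, 0 < h0 <= 1 /\ forall h, 0 <= h <= h0 -> (M1 - eta) * h <= G11 h) ->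
  (forall eta, 0 < eta -> exists h0, 0 < h0 <= 1 /\ forall h, 0 <= h <= h0 -> (M2 - eta) * h <= G12 h) ->
  (forall eta, 0 < eta -> exists h0, 0 < h0 <= 1 /\ forall h, 0 <= h <= h0 -> (m1 - eta) * h <= G21 h) ->
  (forall eta, 0 < eta -> exists h0, 0 < h0 <= 1 /\ forall h, 0 <= h <= h0 -> (m2 - eta) * h <= G22 h) ->
  M1 * ((1-p) * M2 * ((1-p) + p*t) + p * m2 * (q + (1-q)*t)) > 1 ->
  m1 * (q * M2 * ((1-p) + p*t) + (1-q) * m2 * (q + (1-q)*t)) > t ->
  exists eps, 0 < eps /\ eps * (1 + t) <= 1 /\
    let h1 := (1-p)*eps + p*(eps*t) in let h2 := q*eps + (1-q)*(eps*t) in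
    let y1 := G12 h1 in let y2 := G22 h2 in
    eps <= G11 ((1-p)*y1 + p*y2) /\ eps * t <= G21 (q*y1 + (1-q)*y2).
Proof.
  intros Hp Hq HM1 HM2 Hm1 Hm2 Ht U12 U22 L11 L12 L21 L22 R1 R2.
  set (al := (1-p) + p*t) in *. set (be := q + (1-q)*t) in *.
  assert (Hal : 0 < al) by (unfold al; nra). assert (Hbe : 0 < be) by (unfold be; nra).
  assert (Hal' : al <= 1 + t) by (unfold al; nra). assert (Hbe' : be <= 1 + t) by (unfold be; nra).
  set (I1 := (1-p) * M2 * al + p * m2 * be) in *.
  set (J1 := (1-p) * al + p * be).
  set (I2 := q * M2 * al + (1-q) * m2 * be) in *.
  set (J2 := q * al + (1-q) * be).
  assert (HJ1 : 0 < J1) by (unfold J1; nra). assert (HJ2 : 0 < J2) by (unfold J2; nra).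
  assert (HI1 : 0 < I1) by (unfold I1; apply Rplus_lt_0_compat; repeat apply Rmult_lt_0_compat; lra).
  assert (HI2 : 0 < I2) by (unfold I2; apply Rplus_lt_0_compat; repeat apply Rmult_lt_0_compat; lra).
  set (g1 := M1 * I1 - 1). set (g2 := m1 * I2 - t).
  assert (Hg1 : 0 < g1) by (unfold g1; lra). assert (Hg2 : 0 < g2) by (unfold g2; lra).
  set (eta := Rmin (Rmin (Rmin (M1/2) (M2/2)) (Rmin (m1/2) (m2/2)))
                   (Rmin (g1 / (I1 + M1 * J1 + 1)) (g2 / (I2 + m1 * J2 + 1)))).
  assert (He : 0 < eta).
  { unfold eta. repeat apply Rmin_glb_lt; try lra; apply Rdiv_lt_0_compat; nra. }
  assert (HeM1 : eta <= M1/2) by (unfold eta; repeat (eapply Rle_trans; [apply Rmin_l|]); lra).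
  assert (HeM2 : eta <= M2/2).
  { unfold eta. eapply Rle_trans; [apply Rmin_l|]. eapply Rle_trans; [apply Rmin_l|]. apply Rmin_r. }
  assert (Hem1 : eta <= m1/2).
  { unfold eta. eapply Rle_trans; [apply Rmin_l|]. eapply Rle_trans; [apply Rmin_r|]. apply Rmin_l. }
  assert (Hem2 : eta <= m2/2).
  { unfold eta. eapply Rle_trans; [apply Rmin_l|]. eapply Rle_trans; [apply Rmin_r|]. apply Rmin_r. }
  assert (Heg1 : eta * (I1 + M1 * J1 + 1) <= g1).
  { assert (eta <= g1 / (I1 + M1 * J1 + 1)).
    { unfold eta. eapply Rle_trans; [apply Rmin_r|]. apply Rmin_l. }
    apply Rmult_le_compat_r with (r := I1 + M1 * J1 + 1) in H; [|nra].
    unfold Rdiv in H. rewrite Rmult_assoc, Rinv_l in H by nra. lra. }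
  assert (Heg2 : eta * (I2 + m1 * J2 + 1) <= g2).
  { assert (eta <= g2 / (I2 + m1 * J2 + 1)).
    { unfold eta. eapply Rle_trans; [apply Rmin_r|]. apply Rmin_r. }
    apply Rmult_le_compat_r with (r := I2 + m1 * J2 + 1) in H; [|nra].
    unfold Rdiv in H. rewrite Rmult_assoc, Rinv_l in H by nra. lra. }
  assert (K1 : 1 <= (M1 - eta) * (I1 - eta * J1)).
  { assert (0 <= eta * eta * J1) by (apply Rmult_le_pos; nra). unfold g1 in Heg1. nra. }
  assert (K2 : t <= (m1 - eta) * (I2 - eta * J2)).
  { assert (0 <= eta * eta * J2) by (apply Rmult_le_pos; nra). unfold g2 in Heg2. nra. }
  destruct (L11 eta He) as [a1 [Ha1 La1]].
  destruct (L12 eta He) as [a2 [Ha2 La2]].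
  destruct (L21 eta He) as [a3 [Ha3 La3]].
  destruct (L22 eta He) as [a4 [Ha4 La4]].
  set (h0 := Rmin (Rmin a1 a2) (Rmin a3 a4)).
  assert (Hh0 : 0 < h0) by (unfold h0; repeat apply Rmin_glb_lt; lra).
  assert (Hh01 : h0 <= a1) by (unfold h0; eapply Rle_trans; [apply Rmin_l|]; apply Rmin_l).
  assert (Hh02 : h0 <= a2) by (unfold h0; eapply Rle_trans; [apply Rmin_l|]; apply Rmin_r).
  assert (Hh03 : h0 <= a3) by (unfold h0; eapply Rle_trans; [apply Rmin_r|]; apply Rmin_l).
  assert (Hh04 : h0 <= a4) by (unfold h0; eapply Rle_trans; [apply Rmin_r|]; apply Rmin_r).
  set (D := (1 + t) * (1 + M2 + m2)).
  assert (HD : 0 < D) by (unfold D; nra).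
  exists (h0 / D).
  assert (Heps : 0 < h0 / D) by (apply Rdiv_lt_0_compat; lra).
  assert (HepsD : h0 / D * D = h0) by (field; lra).
  set (eps := h0 / D) in *.
  assert (HE1 : eps * (1 + t) <= h0).
  { rewrite <- HepsD. unfold D. assert (0 <= eps * (1+t) * (M2 + m2)) by (apply Rmult_le_pos; nra). nra. }
  split; [lra|]. split; [lra|]. cbv zeta.
  set (h1 := (1-p)*eps + p*(eps*t)). set (h2 := q*eps + (1-q)*(eps*t)).
  assert (Eh1 : h1 = eps * al) by (unfold h1, al; ring).
  assert (Eh2 : h2 = eps * be) by (unfold h2, be; ring).
  assert (Bh1 : 0 <= h1 <= eps * (1+t)) by (rewrite Eh1; split; nra).
  assert (Bh2 : 0 <= h2 <= eps * (1+t)) by (rewrite Eh2; split; nra).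
  pose proof (La2 h1 ltac:(lra)) as Y1l. pose proof (U12 h1 ltac:(lra)) as Y1u.
  pose proof (La4 h2 ltac:(lra)) as Y2l. pose proof (U22 h2 ltac:(lra)) as Y2u.
  set (y1 := G12 h1) in *. set (y2 := G22 h2) in *.
  assert (y1 >= 0) by nra. assert (y2 >= 0) by nra.
  assert (Yb : y1 + y2 <= eps * (1 + t) * (M2 + m2)) by nra.
  assert (Hz : eps * (1 + t) * (M2 + m2) <= h0).
  { rewrite <- HepsD. unfold D. nra. }
  split.
  - assert (Z1 : eps * (I1 - eta * J1) <= (1-p)*y1 + p*y2).
    { unfold I1, J1. rewrite Eh1, Eh2 in *. nra. }
    pose proof (La1 ((1-p)*y1 + p*y2) ltac:(split; nra)).
    assert (0 <= M1 - eta) by lra.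
    assert ((M1 - eta) * (eps * (I1 - eta * J1)) <= (M1 - eta) * ((1-p)*y1 + p*y2)) by
      (apply Rmult_le_compat_l; lra).
    nra.
  - assert (Z2 : eps * (I2 - eta * J2) <= q*y1 + (1-q)*y2).
    { unfold I2, J2. rewrite Eh1, Eh2 in *. nra. }
    pose proof (La3 (q*y1 + (1-q)*y2) ltac:(split; nra)).
    assert (0 <= m1 - eta) by lra.
    assert ((m1 - eta) * (eps * (I2 - eta * J2)) <= (m1 - eta) * (q*y1 + (1-q)*y2)) by
      (apply Rmult_le_compat_l; lra).
    nra.
Qed.

Definition Ab (p q M1 M2 m1 m2 : R) : R := M1*(1-p)*M2*p + M1*p*m2*(1-q).
Definition Ad (p q M1 M2 m1 m2 : R) : R := m1*q*M2*p + m1*(1-q)*m2*(1-q).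
Definition Aa (p q M1 M2 m1 m2 : R) : R := M1*(1-p)*M2*(1-p) + M1*p*m2*q.
Definition Ac (p q M1 M2 m1 m2 : R) : R := m1*q*M2*(1-p) + m1*(1-q)*m2*q.

Lemma keyA (G11 G12 G21 G22 : R -> R) p q M1 M2 m1 m2 c11 c12 c21 c22 delta beta u1 u2 :
  0 < p < 1 -> 0 < q < 1 -> 0 < M1 -> 0 < M2 -> 0 < m1 -> 0 < m2 ->
  0 <= c11 -> 0 <= c12 -> 0 <= c21 -> 0 <= c22 -> 0 < delta -> 0 < beta ->
  (forall h, 0 <= h <= 1 -> G11 h <= M1 * h - c11 * h^2) ->
  (forall h, 0 <= h <= 1 -> G12 h <= M2 * h - c12 * h^2) ->
  (forall h, 0 <= h <= 1 -> G21 h <= m1 * h - c21 * h^2) ->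
  (forall h, 0 <= h <= 1 -> G22 h <= m2 * h - c22 * h^2) ->
  (forall h, 0 <= h <= 1 -> G12 h <= 1) ->
  (forall h, 0 <= h <= 1 -> G22 h <= 1) ->
  (forall h, delta <= h <= 1 -> beta <= G12 h) ->
  (forall h, delta <= h <= 1 -> beta <= G22 h) ->
  Ad p q M1 M2 m1 m2 < 1 ->
  Ab p q M1 M2 m1 m2 * Ac p q M1 M2 m1 m2 <= (1 - Aa p q M1 M2 m1 m2) * (1 - Ad p q M1 M2 m1 m2) ->
  delta <= u1 <= 1 -> delta <= u2 <= 1 ->
  let a := Aa p q M1 M2 m1 m2 in let b := Ab p q M1 M2 m1 m2 in
  let c := Ac p q M1 M2 m1 m2 in let d := Ad p q M1 M2 m1 m2 in
  let h1 := (1-p)*u1 + p*u2 in let h2 := q*u1 + (1-q)*u2 in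
  let y1 := G12 h1 in let y2 := G22 h2 in
  (1 - d) * G11 ((1-p)*y1 + p*y2) + b * G21 (q*y1 + (1-q)*y2) <=
  (1 - d) * u1 + b * u2 -
  (((1-a)*(1-d) - b*c) * delta
   + (1-d) * (M1*((1-p)*c12 + p*c22)*delta^2 + c11*beta^2)
   + b * (m1*(q*c12 + (1-q)*c22)*delta^2 + c21*beta^2)).
Proof.
  intros Hp Hq HM1 HM2 Hm1 Hm2 C11 C12 C21 C22 Hd Hb U11 U12 U21 U22 O12 O22 B12 B22 Hdl Hdet Hu1 Hu2.
  intros a b c d h1 h2 y1 y2.
  assert (Bh1 : delta <= h1 <= 1) by (unfold h1; split; nra).
  assert (Bh2 : delta <= h2 <= 1) by (unfold h2; split; nra).
  assert (Y1 : y1 <= M2 * h1 - c12 * delta^2).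
  { pose proof (U12 h1 ltac:(lra)). assert (c12 * delta^2 <= c12 * h1^2) by (apply Rmult_le_compat_l; nra).
    unfold y1; lra. }
  assert (Y2 : y2 <= m2 * h2 - c22 * delta^2).
  { pose proof (U22 h2 ltac:(lra)). assert (c22 * delta^2 <= c22 * h2^2) by (apply Rmult_le_compat_l; nra).
    unfold y2; lra. }
  assert (Y1b : beta <= y1 <= 1) by (split; [apply B12; lra| apply O12; lra]).
  assert (Y2b : beta <= y2 <= 1) by (split; [apply B22; lra| apply O22; lra]).
  set (z1 := (1-p)*y1 + p*y2). set (z2 := q*y1 + (1-q)*y2).
  assert (Bz1 : beta <= z1 <= 1) by (unfold z1; split; nra).
  assert (Bz2 : beta <= z2 <= 1) by (unfold z2; split; nra).
  assert (W1 : G11 z1 <= M1 * z1 - c11 * beta^2).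
  { pose proof (U11 z1 ltac:(lra)). assert (c11 * beta^2 <= c11 * z1^2) by (apply Rmult_le_compat_l; nra). lra. }
  assert (W2 : G21 z2 <= m1 * z2 - c21 * beta^2).
  { pose proof (U21 z2 ltac:(lra)). assert (c21 * beta^2 <= c21 * z2^2) by (apply Rmult_le_compat_l; nra). lra. }
  assert (V1 : G11 z1 <= M1 * ((1-p)*(M2 * h1 - c12 * delta^2) + p*(m2 * h2 - c22 * delta^2)) - c11 * beta^2).
  { assert (M1 * z1 <= M1 * ((1-p)*(M2 * h1 - c12 * delta^2) + p*(m2 * h2 - c22 * delta^2)))
      by (apply Rmult_le_compat_l; [lra| unfold z1; nra]). lra. }
  assert (V2 : G21 z2 <= m1 * (q*(M2 * h1 - c12 * delta^2) + (1-q)*(m2 * h2 - c22 * delta^2)) - c21 * beta^2).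
  { assert (m1 * z2 <= m1 * (q*(M2 * h1 - c12 * delta^2) + (1-q)*(m2 * h2 - c22 * delta^2)))
      by (apply Rmult_le_compat_l; [lra| unfold z2; nra]). lra. }
  assert (Hbp : 0 <= b) by (unfold b, Ab; assert (0 < M1*(1-p)*M2*p) by (repeat apply Rmult_lt_0_compat; lra);
                           assert (0 < M1*p*m2*(1-q)) by (repeat apply Rmult_lt_0_compat; lra); lra).
  assert (Hdp : 0 < 1 - d) by (unfold d; lra).
  assert (S1 : (1-d) * G11 z1 <= (1-d) * (M1 * ((1-p)*(M2 * h1 - c12 * delta^2) + p*(m2 * h2 - c22 * delta^2)) - c11 * beta^2))
    by (apply Rmult_le_compat_l; lra).
  assert (S2 : b * G21 z2 <= b * (m1 * (q*(M2 * h1 - c12 * delta^2) + (1-q)*(m2 * h2 - c22 * delta^2)) - c21 * beta^2))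
    by (apply Rmult_le_compat_l; lra).
  assert (E : (1-d) * (M1 * ((1-p)*(M2 * h1 - c12 * delta^2) + p*(m2 * h2 - c22 * delta^2)) - c11 * beta^2)
            + b * (m1 * (q*(M2 * h1 - c12 * delta^2) + (1-q)*(m2 * h2 - c22 * delta^2)) - c21 * beta^2)
            = (1 - d) * u1 + b * u2 - ((1-a)*(1-d) - b*c) * u1
              - ((1-d) * (M1*((1-p)*c12 + p*c22)*delta^2 + c11*beta^2)
                 + b * (m1*(q*c12 + (1-q)*c22)*delta^2 + c21*beta^2))).
  { unfold a, b, c, d, h1, h2, Aa, Ab, Ac, Ad. ring. }
  assert (((1-a)*(1-d) - b*c) * delta <= ((1-a)*(1-d) - b*c) * u1) by (apply Rmult_le_compat_l; unfold a,b,c,d; lra).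
  lra.
Qed.

Lemma ext_shift L p q n t : ext L p q n (S (S t)) = ext L p q n t.
Proof.
  revert t. induction n; intro t; [reflexivity|].
  simpl. rewrite IHn. reflexivity.
Qed.

Lemma ext_range L p q n t : (forall i e, is_law (L i e)) -> 0 <= p <= 1 -> 0 <= q <= 1 ->
  0 <= fst (ext L p q n t) <= 1 /\ 0 <= snd (ext L p q n t) <= 1.
Proof.
  intros HL Hp Hq. revert t. induction n; intro t; simpl; [lra|].
  destruct (IHn (S t)) as [H1 H2]. split; apply pgf_range; auto; nra.
Qed.

Lemma ext_mono L p q n t : (forall i e, is_law (L i e)) -> 0 <= p <= 1 -> 0 <= q <= 1 ->
  fst (ext L p q n t) <= fst (ext L p q (S n) t) /\ snd (ext L p q n t) <= snd (ext L p q (S n) t).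
Proof.
  intros HL Hp Hq. revert t. induction n; intro t.
  - pose proof (ext_range L p q 1 t HL Hp Hq). simpl in *. lra.
  - destruct (IHn (S t)) as [H1 H2].
    pose proof (ext_range L p q n (S t) HL Hp Hq).
    pose proof (ext_range L p q (S n) (S t) HL Hp Hq).
    change (ext L p q (S n) t) with
      (pgf (L true (env t)) ((1 - p) * fst (ext L p q n (S t)) + p * snd (ext L p q n (S t))),
       pgf (L false (env t)) (q * fst (ext L p q n (S t)) + (1 - q) * snd (ext L p q n (S t)))).
    change (ext L p q (S (S n)) t) with
      (pgf (L true (env t)) ((1 - p) * fst (ext L p q (S n) (S t)) + p * snd (ext L p q (S n) (S t))),
       pgf (L false (env t)) (q * fst (ext L p q (S n) (S t)) + (1 - q) * snd (ext L p q (S n) (S t)))).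
    cbn [fst snd].
    destruct H as [[A1 A2] [A3 A4]]. destruct H0 as [[B1 B2] [B3 B4]].
    split; apply pgf_mono; auto; nra.
Qed.

Lemma ext_mono_le L p q n m t : (forall i e, is_law (L i e)) -> 0 <= p <= 1 -> 0 <= q <= 1 ->
  (n <= m)%nat ->
  fst (ext L p q n t) <= fst (ext L p q m t) /\ snd (ext L p q n t) <= snd (ext L p q m t).
Proof.
  intros HL Hp Hq Hnm. induction Hnm; [lra|].
  pose proof (ext_mono L p q m t HL Hp Hq). lra.
Qed.

Lemma ext_two L p q n : ext L p q (S (S n)) 0 =
  (pgf (L true true) ((1-p) * pgf (L true false) ((1-p) * fst (ext L p q n 0) + p * snd (ext L p q n 0))
                      + p * pgf (L false false) (q * fst (ext L p q n 0) + (1-q) * snd (ext L p q n 0))),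
   pgf (L false true) (q * pgf (L true false) ((1-p) * fst (ext L p q n 0) + p * snd (ext L p q n 0))
                      + (1-q) * pgf (L false false) (q * fst (ext L p q n 0) + (1-q) * snd (ext L p q n 0)))).
Proof. simpl. rewrite ext_shift. reflexivity. Qed.

Lemma law_c pi m : is_law pi -> has_mean pi m -> exists c, 0 <= c /\
  (forall h, 0 <= h <= 1 -> 1 - pgf pi (1-h) <= m*h - c*h^2) /\
  (c > 0 \/ (m = pi 1%nat /\ pi 1%nat <= 1)).
Proof.
  intros Hl Hm. destruct (classic (exists k, (2 <= k)%nat /\ 0 < pi k)) as [[k [Hk Hpk]]|Hn].
  - exists (pi k). split; [lra|]. split; [|left; lra].
    intros h Hh. apply g_upper2; auto.
  - exists 0. split; [lra|]. split.
    + intros h Hh. pose proof (g_upper pi m h Hl Hm Hh). lra.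
    + right. apply linear_mean; auto. intros k Hk.
      destruct Hl as [Hp _]. pose proof (Hp k).
      destruct (Req_dec (pi k) 0); auto. exfalso. apply Hn. exists k. split; auto. lra.
Qed.

Lemma lin_det p q M1 M2 m1 m2 : 0 < p < 1 -> 0 < q < 1 ->
  0 < M1 <= 1 -> 0 < M2 <= 1 -> 0 < m1 <= 1 -> 0 < m2 <= 1 ->
  (M1 < 1 \/ M2 < 1 \/ m1 < 1 \/ m2 < 1) ->
  Ab p q M1 M2 m1 m2 * Ac p q M1 M2 m1 m2 < (1 - Aa p q M1 M2 m1 m2) * (1 - Ad p q M1 M2 m1 m2).
Proof.
  intros Hp Hq H1 H2 H3 H4 Hs.
  set (r1 := M1 * ((1-p)*M2 + p*m2)). set (r2 := m1 * (q*M2 + (1-q)*m2)).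
  assert (E : (1 - Aa p q M1 M2 m1 m2) * (1 - Ad p q M1 M2 m1 m2) - Ab p q M1 M2 m1 m2 * Ac p q M1 M2 m1 m2
     = (1-r1)*(1-r2) + Ab p q M1 M2 m1 m2 * (1-r2) + Ac p q M1 M2 m1 m2 * (1-r1)).
  { unfold r1, r2, Aa, Ab, Ac, Ad. ring. }
  assert (Hb : 0 < Ab p q M1 M2 m1 m2).
  { unfold Ab. assert (0 < M1*(1-p)*M2*p) by (repeat apply Rmult_lt_0_compat; lra).
    assert (0 < M1*p*m2*(1-q)) by (repeat apply Rmult_lt_0_compat; lra). lra. }
  assert (Hc : 0 < Ac p q M1 M2 m1 m2).
  { unfold Ac. assert (0 < m1*q*M2*(1-p)) by (repeat apply Rmult_lt_0_compat; lra).
    assert (0 < m1*(1-q)*m2*q) by (repeat apply Rmult_lt_0_compat; lra). lra. }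
  assert (I1 : (1-p)*M2 + p*m2 <= 1) by nra.
  assert (I2 : q*M2 + (1-q)*m2 <= 1) by nra.
  assert (R1 : r1 <= 1) by (unfold r1; nra).
  assert (R2 : r2 <= 1) by (unfold r2; nra).
  assert (Hstr : r1 < 1 \/ r2 < 1).
  { destruct Hs as [Hs|[Hs|[Hs|Hs]]].
    - left. unfold r1. assert (0 < (1-p)*M2 + p*m2) by nra. nra.
    - left. unfold r1. assert ((1-p)*M2 + p*m2 < 1) by nra. nra.
    - right. unfold r2. assert (0 < q*M2 + (1-q)*m2) by nra. nra.
    - left. unfold r1. assert ((1-p)*M2 + p*m2 < 1) by nra. nra. }
  assert (0 <= (1-r1)*(1-r2)) by (apply Rmult_le_pos; lra).
  destruct Hstr; nra.
Qed.

Lemma exists_t a b c d : 0 < b -> 0 < c -> a + d > Rmin 2 (1 + (a*d - b*c)) ->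
  exists t, 0 < t /\ a + b * t > 1 /\ c + d * t > t.
Proof.
  intros Hb Hc H.
  destruct (Rle_lt_dec 1 d) as [Hd|Hd].
  - exists ((Rabs (1-a) + 1) / b). assert (0 < (Rabs (1-a) + 1) / b) by
      (apply Rdiv_lt_0_compat; [pose proof (Rabs_pos (1-a)); lra| lra]).
    split; [lra|]. split.
    + replace (b * ((Rabs (1 - a) + 1) / b)) with (Rabs (1-a) + 1) by (field; lra).
      pose proof (Rle_abs (1-a)). lra.
    + nra.
  - set (r := c / (1-d)). set (s := Rmax 0 ((1-a)/b)).
    assert (Hr : 0 < r) by (apply Rdiv_lt_0_compat; lra).
    assert (Hrc : r * (1-d) = c) by (unfold r; field; lra).
    assert (Hs1 : 0 <= s) by apply Rmax_l.
    assert (Hs2 : (1-a)/b <= s) by apply Rmax_r.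
    assert (Hsb : b * ((1-a)/b) = 1 - a) by (field; lra).
    assert (Hsr : s < r).
    { unfold s. apply Rmax_lub_lt; auto.
      destruct (Rle_lt_dec a 1) as [Ha|Ha].
      - assert (Hdet : (1-a)*(1-d) < b*c).
        { unfold Rmin in H. destruct (Rle_dec 2 (1 + (a*d-b*c))); nra. }
        apply Rmult_lt_reg_r with (b * (1-d)); [nra|].
        replace ((1 - a) / b * (b * (1 - d))) with ((1-a)*(1-d)) by (field; lra).
        replace (r * (b * (1 - d))) with (b * c) by (rewrite <- Hrc; ring). lra.
      - assert ((1-a)/b < 0). { unfold Rdiv. apply Rmult_neg_pos; [lra| apply Rinv_0_lt_compat; lra]. }
        lra. }
    exists ((s + r)/2). split; [lra|]. split.
    + assert (b * ((1-a)/b) < b * ((s+r)/2)) by (apply Rmult_lt_compat_l; lra). lra.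
    + assert ((s+r)/2 * (1-d) < r * (1-d)) by (apply Rmult_lt_compat_r; lra). lra.
Qed.

Definition Gf (pi : nat -> R) (h : R) : R := 1 - pgf pi (1 - h).

Lemma Gf_range pi h : is_law pi -> 0 <= h <= 1 -> 0 <= Gf pi h <= 1.
Proof. intros Hl Hh. unfold Gf. pose proof (pgf_range pi (1-h) Hl ltac:(lra)). lra. Qed.

Lemma Gf_mono pi h h' : is_law pi -> 0 <= h -> h <= h' -> h' <= 1 -> Gf pi h <= Gf pi h'.
Proof. intros Hl H1 H2 H3. unfold Gf. pose proof (pgf_mono pi (1-h') (1-h) Hl ltac:(lra) ltac:(lra) ltac:(lra)). lra. Qed.

Lemma two_G L p q n :
  let u1 := 1 - fst (ext L p q n 0) in let u2 := 1 - snd (ext L p q n 0) in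
  let y1 := Gf (L true false) ((1-p)*u1 + p*u2) in let y2 := Gf (L false false) (q*u1 + (1-q)*u2) in
  1 - fst (ext L p q (S (S n)) 0) = Gf (L true true) ((1-p)*y1 + p*y2) /\
  1 - snd (ext L p q (S (S n)) 0) = Gf (L false true) (q*y1 + (1-q)*y2).
Proof.
  intros. rewrite ext_two. unfold y1, y2, u1, u2, Gf. cbn [fst snd].
  set (fx := fst (ext L p q n 0)). set (sx := snd (ext L p q n 0)).
  replace (1 - ((1-p)*(1-fx) + p*(1-sx))) with ((1-p)*fx + p*sx) by ring.
  replace (1 - (q*(1-fx) + (1-q)*(1-sx))) with (q*fx + (1-q)*sx) by ring.
  set (Y1 := pgf (L true false) ((1-p)*fx + p*sx)). set (Y2 := pgf (L false false) (q*fx + (1-q)*sx)).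
  replace (1 - ((1-p)*(1-Y1) + p*(1-Y2))) with ((1-p)*Y1 + p*Y2) by ring.
  replace (1 - (q*(1-Y1) + (1-q)*(1-Y2))) with (q*Y1 + (1-q)*Y2) by ring.
  split; reflexivity.
Qed.

Lemma dirB (L : bool -> bool -> nat -> R) (p q M1 M2 m1 m2 : R) :
  0 < p < 1 -> 0 < q < 1 ->
  (forall i e, is_law (L i e)) ->
  has_mean (L true true) M1 -> has_mean (L true false) M2 ->
  has_mean (L false true) m1 -> has_mean (L false false) m2 ->
  0 < M1 -> 0 < M2 -> 0 < m1 -> 0 < m2 ->
  Aa p q M1 M2 m1 m2 + Ad p q M1 M2 m1 m2 >
    Rmin 2 (1 + (Aa p q M1 M2 m1 m2 * Ad p q M1 M2 m1 m2 - Ab p q M1 M2 m1 m2 * Ac p q M1 M2 m1 m2)) ->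
  forall i, persists L p q i.
Proof.
  intros Hp Hq HL HM1 HM2 Hm1 Hm2 PM1 PM2 Pm1 Pm2 Hc.
  assert (Hb : 0 < Ab p q M1 M2 m1 m2).
  { unfold Ab. assert (0 < M1*(1-p)*M2*p) by (repeat apply Rmult_lt_0_compat; lra).
    assert (0 < M1*p*m2*(1-q)) by (repeat apply Rmult_lt_0_compat; lra). lra. }
  assert (Hcc : 0 < Ac p q M1 M2 m1 m2).
  { unfold Ac. assert (0 < m1*q*M2*(1-p)) by (repeat apply Rmult_lt_0_compat; lra).
    assert (0 < m1*(1-q)*m2*q) by (repeat apply Rmult_lt_0_compat; lra). lra. }
  destruct (exists_t _ _ _ _ Hb Hcc Hc) as [t [Ht [T1 T2]]].
  assert (R1 : M1 * ((1-p) * M2 * ((1-p) + p*t) + p * m2 * (q + (1-q)*t)) > 1).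
  { replace (M1 * ((1-p) * M2 * ((1-p) + p*t) + p * m2 * (q + (1-q)*t)))
      with (Aa p q M1 M2 m1 m2 + Ab p q M1 M2 m1 m2 * t) by (unfold Aa, Ab; ring). lra. }
  assert (R2 : m1 * (q * M2 * ((1-p) + p*t) + (1-q) * m2 * (q + (1-q)*t)) > t).
  { replace (m1 * (q * M2 * ((1-p) + p*t) + (1-q) * m2 * (q + (1-q)*t)))
      with (Ac p q M1 M2 m1 m2 + Ad p q M1 M2 m1 m2 * t) by (unfold Ac, Ad; ring). lra. }
  assert (Lo : forall i e m, has_mean (L i e) m -> forall eta, 0 < eta -> exists h0, 0 < h0 <= 1 /\
            forall h, 0 <= h <= h0 -> (m - eta) * h <= Gf (L i e) h).
  { intros i e m Hm eta He. exact (g_lower (L i e) m eta (HL i e) Hm He). }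
  assert (Up : forall i e m, has_mean (L i e) m -> forall h, 0 <= h <= 1 -> Gf (L i e) h <= m * h).
  { intros i e m Hm h Hh. exact (g_upper (L i e) m h (HL i e) Hm Hh). }
  destruct (keyB (Gf (L true true)) (Gf (L true false)) (Gf (L false true)) (Gf (L false false))
              p q M1 M2 m1 m2 t Hp Hq PM1 PM2 Pm1 Pm2 Ht
              (Up _ _ _ HM2) (Up _ _ _ Hm2) (Lo _ _ _ HM1) (Lo _ _ _ HM2) (Lo _ _ _ Hm1) (Lo _ _ _ Hm2) R1 R2)
    as [eps [He [He1 [K1 K2]]]].
  assert (Hpp : 0 <= p <= 1) by lra. assert (Hqq : 0 <= q <= 1) by lra.
  assert (Claim : forall n, fst (ext L p q (2*n) 0) <= 1 - eps /\ snd (ext L p q (2*n) 0) <= 1 - eps * t).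
  { induction n.
    - simpl. nra.
    - replace (2 * S n)%nat with (S (S (2*n))) by lia.
      destruct (two_G L p q (2*n)) as [E1 E2].
      set (u1 := 1 - fst (ext L p q (2*n) 0)) in *. set (u2 := 1 - snd (ext L p q (2*n) 0)) in *.
      destruct (ext_range L p q (2*n) 0 HL Hpp Hqq) as [X1 X2].
      assert (U1 : eps <= u1 <= 1) by (unfold u1; lra).
      assert (U2 : eps * t <= u2 <= 1) by (unfold u2; lra).
      set (h1 := (1-p)*eps + p*(eps*t)) in *. set (h2 := q*eps + (1-q)*(eps*t)) in *.
      assert (Et : 0 <= eps * t) by (apply Rmult_le_pos; lra).
      assert ((1-p)*eps <= (1-p)*u1) by (apply Rmult_le_compat_l; lra).
      assert (p*(eps*t) <= p*u2) by (apply Rmult_le_compat_l; lra).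
      assert (q*eps <= q*u1) by (apply Rmult_le_compat_l; lra).
      assert ((1-q)*(eps*t) <= (1-q)*u2) by (apply Rmult_le_compat_l; lra).
      assert (0 <= (1-p)*eps) by (apply Rmult_le_pos; lra).
      assert (0 <= p*(eps*t)) by (apply Rmult_le_pos; lra).
      assert (0 <= q*eps) by (apply Rmult_le_pos; lra).
      assert (0 <= (1-q)*(eps*t)) by (apply Rmult_le_pos; lra).
      assert ((1-p)*u1 <= (1-p)) by (rewrite <- (Rmult_1_r (1-p)) at 2; apply Rmult_le_compat_l; lra).
      assert (p*u2 <= p) by (rewrite <- (Rmult_1_r p) at 2; apply Rmult_le_compat_l; lra).
      assert (q*u1 <= q) by (rewrite <- (Rmult_1_r q) at 2; apply Rmult_le_compat_l; lra).
      assert ((1-q)*u2 <= (1-q)) by (rewrite <- (Rmult_1_r (1-q)) at 2; apply Rmult_le_compat_l; lra).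
      assert (Bh1 : 0 <= h1 <= (1-p)*u1 + p*u2) by (unfold h1; split; lra).
      assert (Bh2 : 0 <= h2 <= q*u1 + (1-q)*u2) by (unfold h2; split; lra).
      assert (Bu1 : (1-p)*u1 + p*u2 <= 1) by lra.
      assert (Bu2 : q*u1 + (1-q)*u2 <= 1) by lra.
      pose proof (Gf_mono _ _ _ (HL true false) (proj1 Bh1) (proj2 Bh1) Bu1) as Y1.
      pose proof (Gf_mono _ _ _ (HL false false) (proj1 Bh2) (proj2 Bh2) Bu2) as Y2.
      assert (W1 : 0 <= Gf (L true false) h1 <= 1) by (apply Gf_range; auto; lra).
      assert (W2 : 0 <= Gf (L false false) h2 <= 1) by (apply Gf_range; auto; lra).
      assert (V1 : 0 <= Gf (L true false) ((1-p)*u1 + p*u2) <= 1) by (apply Gf_range; auto; lra).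
      assert (V2 : 0 <= Gf (L false false) (q*u1 + (1-q)*u2) <= 1) by (apply Gf_range; auto; lra).
      set (w1 := Gf (L true false) h1) in *. set (w2 := Gf (L false false) h2) in *.
      set (v1 := Gf (L true false) ((1-p)*u1 + p*u2)) in *.
      set (v2 := Gf (L false false) (q*u1 + (1-q)*u2)) in *.
      assert ((1-p)*w1 <= (1-p)*v1) by (apply Rmult_le_compat_l; lra).
      assert (p*w2 <= p*v2) by (apply Rmult_le_compat_l; lra).
      assert (q*w1 <= q*v1) by (apply Rmult_le_compat_l; lra).
      assert ((1-q)*w2 <= (1-q)*v2) by (apply Rmult_le_compat_l; lra).
      assert (0 <= (1-p)*w1) by (apply Rmult_le_pos; lra).
      assert (0 <= p*w2) by (apply Rmult_le_pos; lra).
      assert (0 <= q*w1) by (apply Rmult_le_pos; lra).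
      assert (0 <= (1-q)*w2) by (apply Rmult_le_pos; lra).
      assert ((1-p)*v1 <= (1-p)) by (rewrite <- (Rmult_1_r (1-p)) at 2; apply Rmult_le_compat_l; lra).
      assert (p*v2 <= p) by (rewrite <- (Rmult_1_r p) at 2; apply Rmult_le_compat_l; lra).
      assert (q*v1 <= q) by (rewrite <- (Rmult_1_r q) at 2; apply Rmult_le_compat_l; lra).
      assert ((1-q)*v2 <= (1-q)) by (rewrite <- (Rmult_1_r (1-q)) at 2; apply Rmult_le_compat_l; lra).
      split.
      + pose proof (Gf_mono (L true true) ((1-p)*w1 + p*w2) ((1-p)*v1 + p*v2) (HL true true)
                     ltac:(lra) ltac:(lra) ltac:(lra)). lra.
      + pose proof (Gf_mono (L false true) (q*w1 + (1-q)*w2) (q*v1 + (1-q)*v2) (HL false true)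
                     ltac:(lra) ltac:(lra) ltac:(lra)). lra. }
  assert (All : forall n, fst (ext L p q n 0) <= 1 - eps /\ snd (ext L p q n 0) <= 1 - eps * t).
  { intro n. pose proof (ext_mono_le L p q n (2*n) 0 HL Hpp Hqq ltac:(lia)). pose proof (Claim n). lra. }
  intro i. exists (eps * Rmin 1 t). split.
  { apply Rmult_lt_0_compat; [lra| apply Rmin_glb_lt; lra]. }
  intro n. pose proof (All n). pose proof (Rmin_l 1 t). pose proof (Rmin_r 1 t).
  destruct i; nra.
Qed.

Lemma beta_ex pi m delta : is_law pi -> has_mean pi m -> 0 < m -> 0 < delta <= 1 ->
  exists beta, 0 < beta /\ forall h, delta <= h <= 1 -> beta <= Gf pi h.
Proof.
  intros Hl Hm Pm Hd. destruct (g_lower pi m (m/2) Hl Hm ltac:(lra)) as [h0 [Hh0 Lh]].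
  set (x := Rmin delta h0).
  assert (Hx : 0 < x) by (unfold x; apply Rmin_glb_lt; lra).
  assert (Hx1 : x <= delta) by apply Rmin_l. assert (Hx2 : x <= h0) by apply Rmin_r.
  exists (m/2 * x). split; [apply Rmult_lt_0_compat; lra|].
  intros h Hh. pose proof (Lh x ltac:(lra)).
  pose proof (Gf_mono pi x h Hl ltac:(lra) ltac:(lra) ltac:(lra)). unfold Gf in *.
  replace (m - m/2) with (m/2) in H by field. lra.
Qed.

Lemma dirA (L : bool -> bool -> nat -> R) (p q M1 M2 m1 m2 : R) :
  0 < p < 1 -> 0 < q < 1 ->
  (forall i e, is_law (L i e)) ->
  has_mean (L true true) M1 -> has_mean (L true false) M2 ->
  has_mean (L false true) m1 -> has_mean (L false false) m2 ->
  0 < M1 -> 0 < M2 -> 0 < m1 -> 0 < m2 ->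
  ~ (forall i e, L i e 1%nat = 1) ->
  (forall i, persists L p q i) ->
  Aa p q M1 M2 m1 m2 + Ad p q M1 M2 m1 m2 >
    Rmin 2 (1 + (Aa p q M1 M2 m1 m2 * Ad p q M1 M2 m1 m2 - Ab p q M1 M2 m1 m2 * Ac p q M1 M2 m1 m2)).
Proof.
  intros Hp Hq HL HM1 HM2 Hm1 Hm2 PM1 PM2 Pm1 Pm2 Hnd Hpers.
  set (a := Aa p q M1 M2 m1 m2). set (b := Ab p q M1 M2 m1 m2).
  set (c := Ac p q M1 M2 m1 m2). set (d := Ad p q M1 M2 m1 m2).
  assert (Hb : 0 < b).
  { unfold b, Ab. assert (0 < M1*(1-p)*M2*p) by (repeat apply Rmult_lt_0_compat; lra).
    assert (0 < M1*p*m2*(1-q)) by (repeat apply Rmult_lt_0_compat; lra). lra. }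
  assert (Hc : 0 < c).
  { unfold c, Ac. assert (0 < m1*q*M2*(1-p)) by (repeat apply Rmult_lt_0_compat; lra).
    assert (0 < m1*(1-q)*m2*q) by (repeat apply Rmult_lt_0_compat; lra). lra. }
  destruct (Rlt_le_dec (Rmin 2 (1 + (a*d - b*c))) (a + d)) as [Hok|Hno]; [exact Hok|exfalso].
  assert (T2 : a + d <= 2) by (pose proof (Rmin_l 2 (1 + (a*d - b*c))); lra).
  assert (T1 : a + d <= 1 + (a*d - b*c)) by (pose proof (Rmin_r 2 (1 + (a*d - b*c))); lra).
  assert (Hdet : b * c <= (1-a)*(1-d)) by lra.
  assert (Hbc : 0 < b*c) by (apply Rmult_lt_0_compat; lra).
  assert (Ha : a < 1).
  { destruct (Rlt_le_dec a 1) as [H|H]; auto. exfalso.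
    destruct (Rle_lt_dec d 1) as [H'|H']; [|lra].
    assert (0 <= (a-1)*(1-d)) by (apply Rmult_le_pos; lra). assert ((1-a)*(1-d) = -((a-1)*(1-d))) by ring. lra. }
  assert (Hd : d < 1).
  { destruct (Rlt_le_dec d 1) as [H|H]; auto. exfalso.
    assert (0 <= (1-a)*(d-1)) by (apply Rmult_le_pos; lra). assert ((1-a)*(1-d) = -((1-a)*(d-1))) by ring. lra. }
  assert (Hpp : 0 <= p <= 1) by lra. assert (Hqq : 0 <= q <= 1) by lra.
  destruct (Hpers true) as [d1 [Hd1 P1]]. destruct (Hpers false) as [d2 [Hd2 P2]].
  cbn iota in P1, P2.
  set (delta := Rmin d1 d2).
  assert (Hde : 0 < delta) by (unfold delta; apply Rmin_glb_lt; lra).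
  assert (Hde1 : delta <= d1) by apply Rmin_l. assert (Hde2 : delta <= d2) by apply Rmin_r.
  assert (Hdle : delta <= 1) by (pose proof (P1 0%nat); simpl in *; lra).
  assert (U : forall n, delta <= 1 - fst (ext L p q (2*n) 0) <= 1 /\ delta <= 1 - snd (ext L p q (2*n) 0) <= 1).
  { intro n. pose proof (P1 (2*n)%nat). pose proof (P2 (2*n)%nat).
    destruct (ext_range L p q (2*n) 0 HL Hpp Hqq). lra. }
  destruct (beta_ex _ _ delta (HL true false) HM2 PM2 ltac:(lra)) as [b1 [Hb1 B1]].
  destruct (beta_ex _ _ delta (HL false false) Hm2 Pm2 ltac:(lra)) as [b2 [Hb2 B2]].
  set (beta := Rmin b1 b2).
  assert (Hbe : 0 < beta) by (unfold beta; apply Rmin_glb_lt; lra).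
  assert (B1' : forall h, delta <= h <= 1 -> beta <= Gf (L true false) h).
  { intros h Hh. pose proof (B1 h Hh). pose proof (Rmin_l b1 b2). fold beta in H0. lra. }
  assert (B2' : forall h, delta <= h <= 1 -> beta <= Gf (L false false) h).
  { intros h Hh. pose proof (B2 h Hh). pose proof (Rmin_r b1 b2). fold beta in H0. lra. }
  destruct (law_c _ _ (HL true true) HM1) as [c11 [C11 [U11 D11]]].
  destruct (law_c _ _ (HL true false) HM2) as [c12 [C12 [U12 D12]]].
  destruct (law_c _ _ (HL false true) Hm1) as [c21 [C21 [U21 D21]]].
  destruct (law_c _ _ (HL false false) Hm2) as [c22 [C22 [U22 D22]]].
  set (kappa := ((1-a)*(1-d) - b*c) * delta
   + (1-d) * (M1*((1-p)*c12 + p*c22)*delta^2 + c11*beta^2)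
   + b * (m1*(q*c12 + (1-q)*c22)*delta^2 + c21*beta^2)).
  assert (Hk : 0 < kappa).
  { assert (Hdp : 0 < 1 - d) by lra.
    assert (Hd2' : 0 < delta^2) by (apply pow_lt; lra).
    assert (Hb2' : 0 < beta^2) by (apply pow_lt; lra).
    assert (K0 : 0 <= ((1-a)*(1-d) - b*c) * delta) by (apply Rmult_le_pos; lra).
    assert (Ka : 0 <= M1*((1-p)*c12)*delta^2) by (repeat apply Rmult_le_pos; lra).
    assert (Kb : 0 <= M1*(p*c22)*delta^2) by (repeat apply Rmult_le_pos; lra).
    assert (Kc : 0 <= m1*(q*c12)*delta^2) by (repeat apply Rmult_le_pos; lra).
    assert (Kd : 0 <= m1*((1-q)*c22)*delta^2) by (repeat apply Rmult_le_pos; lra).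
    assert (Ke : 0 <= c11*beta^2) by (apply Rmult_le_pos; lra).
    assert (Kf : 0 <= c21*beta^2) by (apply Rmult_le_pos; lra).
    assert (Ek : kappa = ((1-a)*(1-d) - b*c) * delta
       + (1-d) * (M1*((1-p)*c12)*delta^2 + M1*(p*c22)*delta^2 + c11*beta^2)
       + b * (m1*(q*c12)*delta^2 + m1*((1-q)*c22)*delta^2 + c21*beta^2)) by (unfold kappa; ring).
    assert (P0 : 0 <= (1-d) * (M1*((1-p)*c12)*delta^2 + M1*(p*c22)*delta^2 + c11*beta^2))
      by (apply Rmult_le_pos; lra).
    assert (P0' : 0 <= b * (m1*(q*c12)*delta^2 + m1*((1-q)*c22)*delta^2 + c21*beta^2))
      by (apply Rmult_le_pos; lra).
    destruct D11 as [D11|[E11 L11]].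
    { assert (0 < c11*beta^2) by (apply Rmult_lt_0_compat; lra).
      assert (0 < (1-d) * (M1*((1-p)*c12)*delta^2 + M1*(p*c22)*delta^2 + c11*beta^2))
        by (apply Rmult_lt_0_compat; lra). lra. }
    destruct D12 as [D12|[E12 L12]].
    { assert (0 < M1*((1-p)*c12)*delta^2) by (repeat apply Rmult_lt_0_compat; lra).
      assert (0 < (1-d) * (M1*((1-p)*c12)*delta^2 + M1*(p*c22)*delta^2 + c11*beta^2))
        by (apply Rmult_lt_0_compat; lra). lra. }
    destruct D21 as [D21|[E21 L21]].
    { assert (0 < c21*beta^2) by (apply Rmult_lt_0_compat; lra).
      assert (0 < b * (m1*(q*c12)*delta^2 + m1*((1-q)*c22)*delta^2 + c21*beta^2))
        by (apply Rmult_lt_0_compat; lra). lra. }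
    destruct D22 as [D22|[E22 L22]].
    { assert (0 < M1*(p*c22)*delta^2) by (repeat apply Rmult_lt_0_compat; lra).
      assert (0 < (1-d) * (M1*((1-p)*c12)*delta^2 + M1*(p*c22)*delta^2 + c11*beta^2))
        by (apply Rmult_lt_0_compat; lra). lra. }
    assert (Hs : M1 < 1 \/ M2 < 1 \/ m1 < 1 \/ m2 < 1).
    { apply NNPP. intro Hn. apply Hnd. intros i e.
      destruct i, e.
      - destruct (Rlt_le_dec M1 1); [tauto| lra].
      - destruct (Rlt_le_dec M2 1); [tauto| lra].
      - destruct (Rlt_le_dec m1 1); [tauto| lra].
      - destruct (Rlt_le_dec m2 1); [tauto| lra]. }
    pose proof (lin_det p q M1 M2 m1 m2 Hp Hq ltac:(lra) ltac:(lra) ltac:(lra) ltac:(lra) Hs).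
    fold a b c d in H.
    assert (0 < ((1-a)*(1-d) - b*c) * delta) by (apply Rmult_lt_0_compat; lra). lra. }
  set (Phi := fun n => (1-d) * (1 - fst (ext L p q (2*n) 0)) + b * (1 - snd (ext L p q (2*n) 0))).
  assert (Step : forall n, Phi (S n) <= Phi n - kappa).
  { intro n. unfold Phi.
    replace (2 * S n)%nat with (S (S (2*n))) by lia.
    destruct (two_G L p q (2*n)) as [E1 E2]. rewrite E1, E2.
    destruct (U n) as [Ua Ub].
    pose proof (keyA (Gf (L true true)) (Gf (L true false)) (Gf (L false true)) (Gf (L false false))
      p q M1 M2 m1 m2 c11 c12 c21 c22 delta beta
      (1 - fst (ext L p q (2*n) 0)) (1 - snd (ext L p q (2*n) 0))
      Hp Hq PM1 PM2 Pm1 Pm2 C11 C12 C21 C22 Hde Hbe U11 U12 U21 U22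
      (fun h Hh => proj2 (Gf_range _ h (HL true false) Hh))
      (fun h Hh => proj2 (Gf_range _ h (HL false false) Hh))
      B1' B2' Hd Hdet Ua Ub) as K.
    cbv zeta in K. fold a b c d in K. fold kappa in K.
    exact K. }
  assert (Iter : forall n, Phi n <= Phi 0%nat - INR n * kappa).
  { induction n; [simpl; lra|]. rewrite S_INR. pose proof (Step n). lra. }
  assert (Pos : forall n, 0 <= Phi n).
  { intro n. unfold Phi. destruct (U n).
    assert (0 <= (1-d) * (1 - fst (ext L p q (2*n) 0))) by (apply Rmult_le_pos; lra).
    assert (0 <= b * (1 - snd (ext L p q (2*n) 0))) by (apply Rmult_le_pos; lra). lra. }
  destruct (INR_archimed kappa (Phi 0%nat) Hk) as [N HN].
  pose proof (Iter N). pose proof (Pos N). lra.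
Qed.

Theorem theorem5p1 (L : bool -> bool -> nat -> R) (p q M1 M2 m1 m2 : R) :
  0 < p < 1 -> 0 < q < 1 ->
  (forall i e, is_law (L i e)) ->
  has_mean (L true true) M1 -> has_mean (L true false) M2 ->
  has_mean (L false true) m1 -> has_mean (L false false) m2 ->
  0 < M1 -> 0 < M2 -> 0 < m1 -> 0 < m2 ->
  ~ (forall i e, L i e 1%nat = 1) ->
  ((forall i, persists L p q i) <->
   M1 * M2 * (1 - p) ^ 2 + (M1 * m2 + m1 * M2) * p * q + m1 * m2 * (1 - q) ^ 2
   > Rmin 2 (1 + M1 * M2 * m1 * m2 * (1 - p - q) ^ 2)).
Proof.
  intros Hp Hq HL HM1 HM2 Hm1 Hm2 PM1 PM2 Pm1 Pm2 Hnd.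
  replace (M1 * M2 * (1 - p) ^ 2 + (M1 * m2 + m1 * M2) * p * q + m1 * m2 * (1 - q) ^ 2)
    with (Aa p q M1 M2 m1 m2 + Ad p q M1 M2 m1 m2) by (unfold Aa, Ad; ring).
  replace (M1 * M2 * m1 * m2 * (1 - p - q) ^ 2)
    with (Aa p q M1 M2 m1 m2 * Ad p q M1 M2 m1 m2 - Ab p q M1 M2 m1 m2 * Ac p q M1 M2 m1 m2)
    by (unfold Aa, Ab, Ac, Ad; ring).
  split.
  - intro H. exact (dirA L p q M1 M2 m1 m2 Hp Hq HL HM1 HM2 Hm1 Hm2 PM1 PM2 Pm1 Pm2 Hnd H).
  - intro H. exact (dirB L p q M1 M2 m1 m2 Hp Hq HL HM1 HM2 Hm1 Hm2 PM1 PM2 Pm1 Pm2 H).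
Qed.
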